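(* Let $\tilde{\mathbf{G}}$ be a degree $2$ cover of $\mathbf{G}=\mathbf{GSp}_{2r}$ (split) with first Brylinski–Deligne invariant $Q_{0,1}$. Then the dual group $\tilde G^\vee$ is isomorphic to $GSp_{2r}$ if $r$ is odd, and to $PGSp_{2r}\times\mathbb{G}_m$ if $r$ is even.
   Context: For $\mathbf{GSp}_{2r}$ with a standard split maximal torus and Borel subgroup, let $e_0,\dots,e_r$ be a basis of the cocharacter lattice $Y$ and $f_0,\dots,f_r$ the dual basis of the character lattice $X$; simple roots are $\alpha_i=f_i-f_{i+1}$ ($1\le i\le r-1$), $\alpha_r=2f_r-f_0$, simple coroots $\alpha_i^\vee=e_i-e_{i+1}$ ($1\le i\le r-1$), $\alpha_r^\vee=e_r$. The Weyl group is $S_r\ltimes\mu_2^r$, with $S_r$ permuting indices $1,\dots,r$ (fixing $e_0$) and involutions $w_j$ with $w_j(e_j)=-e_j$, $w_j(e_i)=e_i$ for $i\ne j,0$, $w_j(e_0)=e_0+e_j$. For integers $\kappa,\nu$, $Q_{\kappa,\nu}$ is the unique Weyl-invariant quadratic form with $Q(e_0)=\kappa$ and $Q(e_i)=\nu$ for $1\le i\le r$. Dual group of a degree $n$ cover with first invariant $Q$: set $\beta_Q(y_1,y_2)=n^{-1}(Q(y_1+y_2)-Q(y_1)-Q(y_2))$, $Y_{Q,n}=\{y\in Y:\beta_Q(y,Y)\subset\mathbb{Z}\}$, $X_{Q,n}=\{x\in n^{-1}X:\langle x,Y_{Q,n}\rangle\subset\mathbb{Z}\}$; for each root $\phi$ put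 $n_\phi=n/\gcd(n,Q(\phi^\vee))$, $\tilde\phi=n_\phi^{-1}\phi$, $\tilde\phi^\vee=n_\phi\phi^\vee$. The dual group is the split reductive group whose root datum has character lattice $Y_{Q,n}$, roots $\{\tilde\phi^\vee\}$, cocharacter lattice $X_{Q,n}$, coroots $\{\tilde\phi\}$. *)

(* Defs.v *)
From HB Require Import structures.
From mathcomp Require Import all_boot all_order all_algebra all_fingroup.
Set Implicit Arguments. Unset Strict Implicit. Unset Printing Implicit Defensive.
Import Order.TTheory GRing.Theory Num.Theory.
Local Open Scope ring_scope.

(* Vectors in Q^d (row vectors).  For GSp_{2r} we use d = r+1, with index
   ord0 for e_0 / f_0 and index (lift ord0 i), i : 'I_r, for e_{i+1} / f_{i+1}. *)
Notation vec d := 'rV[rat]_d.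

Definition dot d (x y : vec d) : rat := \sum_(k < d) x 0 k * y 0 k.

Definition isZ d (v : vec d) : Prop := forall k, v 0 k \is a Num.int.

Definition ev d (k : 'I_d) : vec d := delta_mx 0 k.
Definition e0 r : vec r.+1 := ev ord0.
Definition ei r (i : 'I_r) : vec r.+1 := ev (lift ord0 i).

(* A root datum in coordinates: (X, Y, R) where X, Y are predicates on Q^d
   (the character and cocharacter lattices, paired by [dot]) and R is a list
   of pairs (root, corresponding coroot); the root set is {a | (a,_) \in R}.
   Isomorphism of root data: a linear iso M of Q^d (extending a group iso of
   the full-rank lattices) mapping X onto X', whose contragredient
   y |-> y (M^{-1})^T maps Y onto Y', and which maps the roots/coroots pairs
   of R bijectively onto those of R'. *)
Definition rdIso d (X Y : vec d -> Prop) (R : seq (vec d * vec d))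
    (X' Y' : vec d -> Prop) (R' : seq (vec d * vec d)) : Prop :=
  exists M : 'M[rat]_d,
    [/\ M \in unitmx,
        forall x, X x <-> X' (x *m M),
        forall y, Y y <-> Y' (y *m (invmx M)^T) &
        forall a b, (a, b) \in R <-> (a *m M, b *m (invmx M)^T) \in R'].

(* All (root, coroot) pairs of GSp_{2r} (f-coordinates, e-coordinates):
   f_i - f_j  / e_i - e_j            (i <> j),
   +-(f_i + f_j - f_0) / +-(e_i + e_j) (i <> j),
   +-(2 f_i - f_0) / +- e_i.
   (These are the Weyl-orbits of the simple roots alpha_i = f_i - f_{i+1},
    alpha_r = 2 f_r - f_0, with coroots e_i - e_{i+1}, e_r.) *)
Definition GSpRoots r : seq (vec r.+1 * vec r.+1) :=
  flatten [seq [seq (ei i - ei j, ei i - ei j) | j <- enum 'I_r & j != i]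
               ++ [seq (ei i + ei j - e0 r, ei i + ei j) | j <- enum 'I_r & j != i]
               ++ [seq (- (ei i + ei j - e0 r), - (ei i + ei j))
                      | j <- enum 'I_r & j != i]
          | i <- enum 'I_r]
  ++ [seq (2%:R *: ei i - e0 r, ei i) | i <- enum 'I_r]
  ++ [seq (- (2%:R *: ei i - e0 r), - ei i) | i <- enum 'I_r].

Definition GSp_X r : vec r.+1 -> Prop := @isZ r.+1.
Definition GSp_Y r : vec r.+1 -> Prop := @isZ r.+1.

(* Weyl group action on Y (generators):
   sigma in S_r permutes e_1..e_r and fixes e_0;
   w_j : e_j |-> -e_j, e_i |-> e_i (i <> j, 0), e_0 |-> e_0 + e_j. *)
Definition permact r (s : 'S_r) (y : vec r.+1) : vec r.+1 :=
  \row_k (match unlift ord0 k with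
          | Some i => y 0 (lift ord0 ((s^-1)%g i))
          | None => y 0 ord0 end).
Definition wact r (j : 'I_r) (y : vec r.+1) : vec r.+1 :=
  y + (y 0 ord0 - 2%:R * y 0 (lift ord0 j)) *: ei j.

Definition isQuadForm d (Q : vec d -> rat) : Prop :=
  (exists B : 'M[rat]_d, forall y, Q y = (y *m B *m y^T) 0 0) /\
  (forall y, isZ y -> Q y \is a Num.int).
Definition WeylInvariant r (Q : vec r.+1 -> rat) : Prop :=
  (forall (s : 'S_r) y, Q (permact s y) = Q y) /\
  (forall (j : 'I_r) y, Q (wact j y) = Q y).

Definition betaQ d (n : nat) (Q : vec d -> rat) (y1 y2 : vec d) : rat :=
  (Q (y1 + y2) - Q y1 - Q y2) / n%:R.
Definition YQn d (n : nat) (Q : vec d -> rat) (y : vec d) : Prop :=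
  isZ y /\ forall y2, isZ y2 -> betaQ n Q y y2 \is a Num.int.
Definition XQn d (n : nat) (Q : vec d -> rat) (x : vec d) : Prop :=
  isZ (n%:R *: x) /\ forall y, YQn n Q y -> dot x y \is a Num.int.
Definition nphi d (n : nat) (Q : vec d -> rat) (cor : vec d) : nat :=
  (n %/ gcdn n `|numq (Q cor)|)%N.
(* dual root datum: character lattice Y_{Q,n}, roots n_phi phi^vee,
   cocharacter lattice X_{Q,n}, coroots n_phi^{-1} phi *)
Definition dualRoots r (n : nat) (Q : vec r.+1 -> rat) : seq (vec r.+1 * vec r.+1) :=
  [seq ((nphi n Q p.2)%:R *: p.2, ((nphi n Q p.2)%:R)^-1 *: p.1) | p <- GSpRoots r].

(* PGSp_{2r} is the adjoint group of type C_r: in coordinates eps_1..eps_r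
   (indices lift ord0 i) its character lattice is the root lattice
   {x in Z^r | sum x_i even}, cocharacter lattice the coweight lattice
   Z^r + Z(1/2,...,1/2); roots +-eps_i +- eps_j (coroot the same),
   +-2 eps_i (coroot +-eps_i).  The factor G_m is index ord0 (X = Y = Z,
   no roots). *)
Definition PGSpGm_X r (x : vec r.+1) : Prop :=
  isZ x /\ ~~ odd `|numq (\sum_(i < r) x 0 (lift ord0 i))|%N.
Definition PGSpGm_Y r (y : vec r.+1) : Prop :=
  y 0 ord0 \is a Num.int /\
  ((forall i : 'I_r, y 0 (lift ord0 i) \is a Num.int) \/
   (forall i : 'I_r, y 0 (lift ord0 i) - 2%:R^-1 \is a Num.int)).
Definition PGSpGm_Roots r : seq (vec r.+1 * vec r.+1) :=
  flatten [seq [seq (ei i - ei j, ei i - ei j) | j <- enum 'I_r & j != i]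
               ++ [seq (ei i + ei j, ei i + ei j) | j <- enum 'I_r & j != i]
               ++ [seq (- (ei i + ei j), - (ei i + ei j)) | j <- enum 'I_r & j != i]
          | i <- enum 'I_r]
  ++ [seq (2%:R *: ei i, ei i) | i <- enum 'I_r]
  ++ [seq (- (2%:R *: ei i), - ei i) | i <- enum 'I_r].

(* Main.v *)
Require Import Defs.
From HB Require Import structures.
From mathcomp Require Import all_boot all_order all_algebra all_fingroup.
From mathcomp Require Import ring lra.
Set Implicit Arguments. Unset Strict Implicit. Unset Printing Implicit Defensive.
Import Order.TTheory GRing.Theory Num.Theory.
Local Open Scope ring_scope.

Section Gen.
Variable d : nat.
Implicit Types (x y u v w : vec d).

Lemma dotE x y : dot x y = (x *m y^T) 0 0.
Proof. by rewrite /dot mxE; apply: eq_bigr => k _; rewrite mxE. Qed.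

Lemma dotDl x y z : dot (x + y) z = dot x z + dot y z.
Proof. by rewrite /dot -big_split; apply: eq_bigr => k _; rewrite mxE mulrDl. Qed.
Lemma dotNl x z : dot (- x) z = - dot x z.
Proof. by rewrite /dot -sumrN; apply: eq_bigr => k _; rewrite mxE mulNr. Qed.
Lemma dotBl x y z : dot (x - y) z = dot x z - dot y z.
Proof. by rewrite dotDl dotNl. Qed.
Lemma dotZl c x z : dot (c *: x) z = c * dot x z.
Proof. by rewrite /dot mulr_sumr; apply: eq_bigr => k _; rewrite mxE mulrA. Qed.
Lemma dotC x y : dot x y = dot y x.
Proof. by rewrite /dot; apply: eq_bigr => k _; rewrite mulrC. Qed.
Lemma dot_ev (a : 'I_d) y : dot (ev a) y = y 0 a.
Proof.
rewrite /dot (bigD1 a) //= big1 ?addr0 => [|k /negbTE kn]; rewrite /ev mxE.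
  by rewrite !eqxx mul1r.
by rewrite kn andbF mul0r.
Qed.
Lemma evE (a k : 'I_d) : (ev a) 0 k = (a == k)%:R.
Proof. by rewrite /ev mxE eqxx /= eq_sym. Qed.

Lemma mul_r1 y a (b : vec d) : y *m (a^T *m b) = (dot y a) *: b.
Proof. by rewrite mulmxA [y *m a^T]mx11_scalar -dotE mul_scalar_mx. Qed.

End Gen.
Definition bil d (B : 'M[rat]_d) (u v : vec d) : rat := (u *m B *m v^T) 0 0.

Section Bil.
Variable d : nat.
Variable B : 'M[rat]_d.
Implicit Types (x y u v w : vec d).
Lemma bilDl u w v : bil B (u + w) v = bil B u v + bil B w v.
Proof. by rewrite /bil !mulmxDl mxE. Qed.
Lemma bilDr u w v : bil B v (u + w) = bil B v u + bil B v w.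
Proof. by rewrite /bil linearD /= mulmxDr mxE. Qed.
Lemma bilNl u v : bil B (- u) v = - bil B u v.
Proof. by rewrite /bil !mulNmx mxE. Qed.
Lemma bilNr u v : bil B v (- u) = - bil B v u.
Proof. by rewrite /bil linearN /= mulmxN mxE. Qed.
Lemma bilBl u w v : bil B (u - w) v = bil B u v - bil B w v.
Proof. by rewrite bilDl bilNl. Qed.
Lemma bilBr u w v : bil B v (u - w) = bil B v u - bil B v w.
Proof. by rewrite bilDr bilNr. Qed.
Lemma bil_expand u v :
  bil B u v = \sum_a \sum_b u 0 a * v 0 b * B a b.
Proof.
rewrite /bil mxE; under eq_bigr => b _ do rewrite !mxE mulr_suml.
rewrite exchange_big; apply: eq_bigr => a _; apply: eq_bigr => b _.
by rewrite mulrAC.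
Qed.
Lemma bil_ev (a b : 'I_d) : bil B (ev a) (ev b) = B a b.
Proof.
rewrite bil_expand (bigD1 a) //= [X in _ + X]big1 => [|k /negbTE kn]; last first.
  by rewrite big1 // => l _; rewrite evE (eq_sym a) kn !mul0r.
rewrite addr0 (bigD1 b) //= [X in _ + X]big1 => [|l /negbTE ln]; last first.
  by rewrite !evE (eq_sym b) ln mulr0 mul0r.
by rewrite addr0 !evE !eqxx !mul1r.
Qed.
End Bil.
Definition sI r (y : vec r.+1) : rat := \sum_(i < r) y 0 (lift ord0 i).

Lemma lift_eq r (i j : 'I_r) : (lift ord0 i == lift ord0 j :> 'I_r.+1) = (i == j).
Proof. by rewrite (inj_eq (@lift_inj _ ord0)). Qed.
Lemma lift_neq0 r (i : 'I_r) : (ord0 == lift ord0 i :> 'I_r.+1) = false.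
Proof. exact/negbTE/neq_lift. Qed.
Lemma lift_neq0' r (i : 'I_r) : (lift ord0 i == ord0 :> 'I_r.+1) = false.
Proof. by rewrite eq_sym lift_neq0. Qed.

Lemma sum_delta r (i : 'I_r) (f : 'I_r -> rat) :
  \sum_(j < r) (i == j)%:R * f j = f i.
Proof.
rewrite (bigD1 i) //= big1 ?addr0 ?eqxx ?mul1r // => j ji.
by rewrite eq_sym (negbTE ji) mul0r.
Qed.

Section Main.
Variable r : nat.
Variable Q : vec r.+1 -> rat.
Variable B : 'M[rat]_r.+1.
Hypothesis hB : forall y, Q y = bil B y y.
Hypothesis hW : forall (j : 'I_r) y, Q (wact j y) = Q y.
Hypothesis Q0 : Q (e0 r) = 0.
Hypothesis Q1 : forall i : 'I_r, Q (ei i) = 1.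

Lemma wactE (j : 'I_r) (y : vec r.+1) c : y 0 ord0 - 2%:R * y 0 (lift ord0 j) = c ->
  wact j y = y + c *: ei j.
Proof. by rewrite /wact => ->. Qed.


Lemma B00 : B ord0 ord0 = 0.
Proof. by rewrite -bil_ev -Q0 hB. Qed.
Lemma Bii i : B (lift ord0 i) (lift ord0 i) = 1.
Proof. by rewrite -bil_ev -(Q1 i) hB. Qed.
Lemma B0i i : B ord0 (lift ord0 i) + B (lift ord0 i) ord0 = -1.
Proof.
have := hW i (e0 r).
rewrite (@wactE i (e0 r) 1); last by rewrite !evE eqxx lift_neq0 mulr0 subr0.
rewrite scale1r Q0 hB /e0 /ei !bilDl !bilDr !bil_ev B00 Bii => h.
by apply/eqP; rewrite -subr_eq0 opprK; apply/eqP; rewrite -h; ring.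
Qed.
Lemma Bij i j : i != j -> B (lift ord0 i) (lift ord0 j) + B (lift ord0 j) (lift ord0 i) = 0.
Proof.
move=> ij; have := hW i (ei i + ei j).
rewrite (@wactE i _ (-2)); last first.
  by rewrite !mxE !eqxx /= lift_eq (negbTE ij) /= addr0 mulr1 !add0r.
have -> : ei i + ei j + (-2) *: ei i = ei j - ei i.
  by apply/rowP => k; rewrite !mxE; ring.
rewrite !hB /ei !bilDl !bilDr !bilNl !bilNr !bil_ev !Bii => h.
lra.
Qed.

Lemma betaE u v : betaQ 2 Q u v =
  \sum_(i < r) u 0 (lift ord0 i) * v 0 (lift ord0 i) - (u 0 ord0 * sI v + v 0 ord0 * sI u) / 2%:R.
Proof.
have -> : betaQ 2 Q u v = (bil B u v + bil B v u) / 2%:R.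
  by rewrite /betaQ !hB !bilDl !bilDr; congr (_ / _); ring.
have -> : bil B u v + bil B v u =
   \sum_a \sum_b u 0 a * v 0 b * (B a b + B b a).
  rewrite !bil_expand [X in _ + X]exchange_big -big_split.
  by apply: eq_bigr => a _; rewrite -big_split; apply: eq_bigr => b _ /=; ring.
rewrite big_ord_recl [X in (X + _)/_]big_ord_recl.
under [X in _ + X]eq_bigr => i _ do rewrite big_ord_recl.
rewrite B00.
have -> : \sum_(j < r) u 0 ord0 * v 0 (lift ord0 j) *
       (B ord0 (lift ord0 j) + B (lift ord0 j) ord0) = - (u 0 ord0 * sI v).
  rewrite /sI mulr_sumr -sumrN; apply: eq_bigr => j _.
  by rewrite (B0i j); ring.
have -> : \sum_(i < r) (u 0 (lift ord0 i) * v 0 ord0 *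
      (B (lift ord0 i) ord0 + B ord0 (lift ord0 i)) +
      \sum_(j < r) u 0 (lift ord0 i) * v 0 (lift ord0 j) *
        (B (lift ord0 i) (lift ord0 j) + B (lift ord0 j) (lift ord0 i)))
   = \sum_(i < r) (- (v 0 ord0 * u 0 (lift ord0 i)) +
          2%:R * (u 0 (lift ord0 i) * v 0 (lift ord0 i))).
  apply: eq_bigr => i _.
  rewrite (bigD1 i) //= big1 => [|j ji]; last first.
    by have := @Bij i j; rewrite eq_sym ji => /(_ isT) ->; rewrite mulr0.
  rewrite addr0 Bii [B (lift ord0 i) ord0 + _]addrC (B0i i); ring.
rewrite big_split /= sumrN -!mulr_sumr /sI.
by field.
Qed.

Lemma Qij i j : i != j -> Q (ei i - ei j) = 2%:R.
Proof.
move=> ij; have := Bij ij; have := Bii i; have := Bii j.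
rewrite hB /ei !bilDl !bilDr !bilNl !bilNr !bil_ev; lra.
Qed.
Lemma Qpij i j : i != j -> Q (ei i + ei j) = 2%:R.
Proof.
move=> ij; have := Bij ij; have := Bii i; have := Bii j.
rewrite hB /ei !bilDl !bilDr !bil_ev; lra.
Qed.
Lemma QN y : Q (- y) = Q y.
Proof. by rewrite !hB bilNl bilNr opprK. Qed.

Lemma nphi1 y : Q y = 2%:R -> nphi 2 Q y = 1%N.
Proof. by rewrite /nphi => ->. Qed.
Lemma nphi2 y : Q y = 1 -> nphi 2 Q y = 2%N.
Proof. by rewrite /nphi => ->. Qed.

Lemma sI_ei (k : 'I_r) : sI (ei k) = 1.
Proof.
rewrite /sI; under eq_bigr do rewrite evE lift_eq -[_%:R]mulr1.
exact: sum_delta.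
Qed.
Lemma sI_e0 : sI (e0 r) = 0.
Proof. by rewrite /sI big1 // => i _; rewrite evE lift_neq0. Qed.
Lemma sum_ei (y : vec r.+1) k :
  \sum_(i < r) y 0 (lift ord0 i) * (ei k) 0 (lift ord0 i) = y 0 (lift ord0 k).
Proof.
under eq_bigr do rewrite evE lift_eq mulrC.
exact: sum_delta.
Qed.
Lemma sum_e0 (y : vec r.+1) :
  \sum_(i < r) y 0 (lift ord0 i) * (e0 r) 0 (lift ord0 i) = 0.
Proof. by rewrite big1 // => i _; rewrite evE lift_neq0 mulr0. Qed.

Lemma isZ_sI (y : vec r.+1) : isZ y -> sI y \is a Num.int.
Proof. by move=> Zy; apply: rpred_sum => i _; apply: Zy. Qed.

Lemma isZ_ev (a : 'I_r.+1) : isZ (ev a).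
Proof. by move=> k; rewrite evE; case: (a == k) => //=; rewrite ?rpred0 ?rpred1. Qed.

Lemma YQnE (r0 : (0 < r)%N) y : YQn 2 Q y <->
  [/\ isZ y, y 0 ord0 / 2%:R \is a Num.int & sI y / 2%:R \is a Num.int].
Proof.
split.
  move=> [Zy h]; split => //.
    have := h (ei (Ordinal r0)) (isZ_ev _).
    rewrite betaE sum_ei sI_ei evE lift_neq0' => h1.
    have -> : y 0 ord0 / 2%:R = y 0 (lift ord0 (Ordinal r0)) -
       (y 0 (lift ord0 (Ordinal r0)) - (y 0 ord0 * 1 + false%:R * sI y) / 2%:R).
      by rewrite /=; field.
    by apply: rpredB => //; apply: Zy.
  have := h (e0 r) (isZ_ev _).
  rewrite betaE sum_e0 sI_e0 evE eqxx => h1.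
  have -> : sI y / 2%:R = - (0 - (y 0 ord0 * 0 + true%:R * sI y) / 2%:R).
    by rewrite /=; field.
  by rewrite rpredN.
move=> [Zy h0 hs]; split => // y2 Zy2.
rewrite betaE.
have -> : (y 0 ord0 * sI y2 + y2 0 ord0 * sI y) / 2%:R =
   y 0 ord0 / 2%:R * sI y2 + y2 0 ord0 * (sI y / 2%:R) by field.
apply: rpredB.
  by apply: rpred_sum => i _; apply: rpredM; try exact: Zy; try exact: Zy2.
by apply: rpredD; apply: rpredM => //; try exact: isZ_sI; try exact: Zy2.
Qed.
End Main.
Lemma even_rat (q : rat) : q \is a Num.int ->
  (~~ odd `|numq q|%N) = (q / 2%:R \is a Num.int).
Proof.
case/intrP=> z ->; rewrite numq_int -dvdn2.
have -> : (2 %| `|z|)%N = (2 %| z)%Z by rewrite dvdzE.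
apply/idP/idP.
  case/dvdzP=> w ->; rewrite rmorphM /= mulfK; last by rewrite pnatr_eq0.
  by rewrite rpred_int.
case/intrP=> w h; apply/dvdzP; exists w; apply: (@intr_inj rat).
by rewrite rmorphM /= -h; field.
Qed.

Lemma half_int (w : rat) : 2%:R * w \is a Num.int ->
  w \is a Num.int \/ w - 2%:R^-1 \is a Num.int.
Proof.
case/intrP=> n hn.
have hw : w = n%:~R / 2%:R by rewrite -hn; field.
have := divz_eq n 2; have := @modz_ge0 n 2 isT.
have := @ltz_pmod n 2 isT.
set m := (n %% 2)%Z; set q := (n %/ 2)%Z => lt2 ge0 hn2.
have : (m == 0) || (m == 1).
  by clearbody m; clear hn2; move: lt2 ge0; case: m => [[|[|k]]|k].
case/orP=> /eqP hm.
  left; rewrite hw hn2 hm addr0 rmorphM /= mulfK ?rpred_int // pnatr_eq0.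
right; have -> : w - 2%:R^-1 = q%:~R.
  by rewrite hw hn2 hm rmorphD rmorphM /=; field.
by rewrite rpred_int.
Qed.

Lemma rdIso_build d (X Y : vec d -> Prop) R (X' Y' : vec d -> Prop) R'
    (M N : 'M[rat]_d) :
  M *m N^T = 1%:M ->
  (forall x, X x <-> X' (x *m M)) ->
  (forall y, Y y <-> Y' (y *m N)) ->
  R' = map (fun p => (p.1 *m M, p.2 *m N)) R ->
  rdIso X Y R X' Y' R'.
Proof.
move=> hMN hX hY hR; have [uM uN] := mulmx1_unit hMN.
have eN : (invmx M)^T = N.
  have -> : invmx M = N^T.
    by rewrite -[RHS]mul1mx -(mulVmx uM) -mulmxA hMN mulmx1.
  by rewrite trmxK.
exists M; rewrite eN; split => // a b; rewrite hR.
have inj : injective (fun p : vec d * vec d => (p.1 *m M, p.2 *m N)).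
  move=> [p1 p2] [q1 q2] /= [e1 e2].
  congr pair; first by rewrite -(mulmxK uM p1) e1 mulmxK.
  have uN' : N \in unitmx by rewrite -unitmx_tr.
  by rewrite -(mulmxK uN' p2) e2 mulmxK.
by have := mem_map inj R (a, b); rewrite /= => ->.
Qed.

Lemma dual_transfer d (P P' T' : vec d -> Prop) (M N : 'M[rat]_d) x :
  M *m N^T = 1%:M ->
  (forall y, P y <-> P' (y *m M)) ->
  (forall w, T' w <-> forall z, P' z -> dot w z \is a Num.int) ->
  (forall k, P (2%:R *: ev k)) ->
  ((isZ (2%:R *: x) /\ forall y, P y -> dot x y \is a Num.int) <-> T' (x *m N)).
Proof.
move=> hMN hP hT h2.
have hNM : N^T *m M = 1%:M by apply: mulmx1C.
have key y : dot (x *m N) (y *m M) = dot x y.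
  have hNMt : N *m M^T = 1%:M by rewrite -[N]trmxK -trmx_mul hMN trmx1.
  by rewrite !dotE trmx_mul !mulmxA -(mulmxA x N) hNMt mulmx1.
rewrite hT; split.
  move=> [_ h] z Pz; have -> : z = (z *m N^T) *m M by rewrite -mulmxA hNM mulmx1.
  by rewrite key; apply: h; rewrite hP -mulmxA hNM mulmx1.
move=> h; split.
  move=> k; rewrite mxE.
  have -> : 2%:R * x 0 k = dot x (2%:R *: ev k) by rewrite dotC dotZl dot_ev.
  by rewrite -key; apply: h; rewrite -hP.
by move=> y Py; rewrite -key; apply: h; rewrite -hP.
Qed.

Lemma isZ_dual d (w : vec d) : isZ w <-> forall z, isZ z -> dot w z \is a Num.int.
Proof.
split.
  by move=> Zw z Zz; apply: rpred_sum => k _; apply: rpredM; [exact: Zw|exact: Zz].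
move=> h k; rewrite -[w 0 k]dot_ev dotC; apply: h => l; rewrite evE.
by case: (k == l); rewrite ?rpred0 ?rpred1.
Qed.

Section Lat.
Variable r : nat.
Implicit Types (w x y z u v : vec r.+1).

Lemma sID u v : sI (u + v) = sI u + sI v.
Proof. by rewrite /sI -big_split; apply: eq_bigr => i _; rewrite mxE. Qed.
Lemma sIN u : sI (- u) = - sI u.
Proof. by rewrite /sI -sumrN; apply: eq_bigr => i _; rewrite mxE. Qed.
Lemma sIZ c u : sI (c *: u) = c * sI u.
Proof. by rewrite /sI mulr_sumr; apply: eq_bigr => i _; rewrite mxE. Qed.
Lemma isZD u v : isZ u -> isZ v -> isZ (u + v).
Proof. by move=> hu hv k; rewrite mxE rpredD. Qed.
Lemma isZN u : isZ u -> isZ (- u).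
Proof. by move=> hu k; rewrite mxE rpredN. Qed.
Lemma isZZ (c : rat) u : c \is a Num.int -> isZ u -> isZ (c *: u).
Proof. by move=> hc hu k; rewrite mxE rpredM. Qed.
Lemma dotDr x u v : dot x (u + v) = dot x u + dot x v.
Proof. by rewrite dotC dotDl !(dotC x). Qed.
Lemma dotNr x u : dot x (- u) = - dot x u.
Proof. by rewrite dotC dotNl dotC. Qed.
Lemma dotZr c x u : dot x (c *: u) = c * dot x u.
Proof. by rewrite dotC dotZl dotC. Qed.
Lemma dot_evr (a : 'I_r.+1) x : dot x (ev a) = x 0 a.
Proof. by rewrite dotC dot_ev. Qed.
Lemma dot_split x y : dot x y = x 0 ord0 * y 0 ord0 +
   \sum_(i < r) x 0 (lift ord0 i) * y 0 (lift ord0 i).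
Proof. by rewrite /dot big_ord_recl. Qed.

Lemma PGSpGm_XE z : PGSpGm_X z <-> isZ z /\ sI z / 2%:R \is a Num.int.
Proof.
rewrite /PGSpGm_X; split => -[Zz h]; split => //.
  by rewrite -even_rat // isZ_sI.
by rewrite even_rat // isZ_sI.
Qed.

Lemma PGSpGm_dual (r0 : (0 < r)%N) w :
  PGSpGm_Y w <-> forall z, PGSpGm_X z -> dot w z \is a Num.int.
Proof.
split.
  move=> [w0 hw] z /PGSpGm_XE [Zz hz]; rewrite dot_split.
  apply: rpredD; first by rewrite rpredM.
  case: hw => hw.
    by apply: rpred_sum => i _; rewrite rpredM.
  have -> : \sum_(i < r) w 0 (lift ord0 i) * z 0 (lift ord0 i) =
     \sum_(i < r) (w 0 (lift ord0 i) - 2%:R^-1) * z 0 (lift ord0 i) + sI z / 2%:R.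
    by rewrite /sI mulr_suml -big_split; apply: eq_bigr => i _ /=; field.
  apply: rpredD => //; apply: rpred_sum => i _; apply: rpredM; [exact: hw|exact: Zz].
move=> h.
have X0 : PGSpGm_X (e0 r) by apply PGSpGm_XE; split; [exact: isZ_ev|rewrite sI_e0 mul0r].
have Xm (i j : 'I_r) : PGSpGm_X (ei i - ei j).
  apply PGSpGm_XE; split; first by apply: isZD; [exact: isZ_ev|apply: isZN; exact: isZ_ev].
  by rewrite sID sIN !sI_ei subrr mul0r.
have X2 (i : 'I_r) : PGSpGm_X (2%:R *: ei i).
  apply PGSpGm_XE; split; first by apply: isZZ; [exact: rpred_nat|exact: isZ_ev].
  by rewrite sIZ sI_ei mulr1 divff // pnatr_eq0.
split; first by have := h _ X0; rewrite dot_evr.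
set i0 := Ordinal r0.
have hm j : w 0 (lift ord0 i0) - w 0 (lift ord0 j) \is a Num.int.
  by have := h _ (Xm i0 j); rewrite dotDr dotNr !dot_evr.
have := h _ (X2 i0); rewrite dotZr dot_evr => /half_int [hi|hh].
  left => j; have -> : w 0 (lift ord0 j) = w 0 (lift ord0 i0) -
     (w 0 (lift ord0 i0) - w 0 (lift ord0 j)) by ring.
  by rewrite rpredB.
right => j; have -> : w 0 (lift ord0 j) - 2%:R^-1 = (w 0 (lift ord0 i0) - 2%:R^-1) -
     (w 0 (lift ord0 i0) - w 0 (lift ord0 j)) by ring.
by rewrite rpredB.
Qed.
End Lat.

Section Mats.
Variable r : nat.
Implicit Types (w x y z u v : vec r.+1).
Definition one : vec r.+1 := const_mx 1.
Definition Me : 'M[rat]_r.+1 := 1%:M - 2%:R^-1 *: ((e0 r)^T *m one).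
Definition Ne : 'M[rat]_r.+1 := 1%:M + one^T *m e0 r.
Definition Mo : 'M[rat]_r.+1 := 1%:M - 2%:R^-1 *: ((e0 r)^T *m one)
   + (r.+1%:R / 4%:R) *: ((e0 r)^T *m e0 r) - 2%:R^-1 *: (one^T *m e0 r).
Definition No : 'M[rat]_r.+1 := 1%:M + (e0 r)^T *m one + one^T *m (one + e0 r).

Lemma dot_one y : dot y one = y 0 ord0 + sI y.
Proof. by rewrite dot_split /sI mxE mulr1; congr (_ + _); apply: eq_bigr => i _; rewrite mxE mulr1. Qed.
Lemma dot_e0 y : dot y (e0 r) = y 0 ord0.
Proof. exact: dot_evr. Qed.
Lemma dot_one_one : dot one one = r.+1%:R.
Proof.
rewrite /dot; under eq_bigr do rewrite mxE mulr1.
by rewrite sumr_const card_ord.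
Qed.

Lemma MeE y : y *m Me = y - (y 0 ord0 / 2%:R) *: one.
Proof. by rewrite /Me mulmxBr mulmx1 -scalemxAr mul_r1 dot_e0 scalerA mulrC. Qed.
Lemma NeE x : x *m Ne = x + dot x one *: e0 r.
Proof. by rewrite /Ne mulmxDr mulmx1 mul_r1. Qed.
Lemma NeTE x : x *m Ne^T = x + x 0 ord0 *: one.
Proof. by rewrite /Ne linearD /= trmx1 trmx_mul trmxK mulmxDr mulmx1 mul_r1 dot_e0. Qed.
Lemma MoE y : y *m Mo = y - (y 0 ord0 / 2%:R) *: one
   + (y 0 ord0 * r.+1%:R / 4%:R) *: e0 r - (dot y one / 2%:R) *: e0 r.
Proof.
rewrite /Mo !mulmxDr !mulmxN mulmx1 -!scalemxAr !mul_r1 !dot_e0 !scalerA.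
by congr (_ - _ + _ - _); congr (_ *: _); rewrite mulrC // mulrA.
Qed.
Lemma NoE x : x *m No = x + x 0 ord0 *: one + dot x one *: (one + e0 r).
Proof. by rewrite /No !mulmxDr mulmx1 !mul_r1 dot_e0 scalerDr addrA. Qed.
Lemma NoTE x : x *m No^T = x + dot x one *: e0 r + dot x (one + e0 r) *: one.
Proof.
by rewrite /No !linearD /= trmx1 !trmx_mul !trmxK ?mulmx1 !mul_r1 dotDr scalerDl !addrA.
Qed.

Lemma mx_eq1 (A : 'M[rat]_r.+1) : (forall y : vec r.+1, y *m A = y) -> A = 1%:M.
Proof. by move=> h; apply/row_matrixP => i; rewrite !rowE h mulmx1. Qed.

Lemma MNe : Me *m Ne^T = 1%:M.
Proof.
apply: mx_eq1 => y; rewrite mulmxA MeE NeTE.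
by apply/rowP => k; rewrite !mxE; field.
Qed.

Lemma MNo : Mo *m No^T = 1%:M.
Proof.
apply: mx_eq1 => y; rewrite mulmxA MoE NoTE.
rewrite !(dotDl, dotDr, dotNl, dotZl) dot_one_one !dot_e0.
rewrite [dot (e0 r) one]dotC dot_e0 /one /e0 !mxE.
by apply/rowP => k; rewrite !mxE /=; field.
Qed.
End Mats.

Section Ylem.
Variable r : nat.
Implicit Types (y : vec r.+1).

Lemma Me_entry y k : (y *m Me r) 0 k = y 0 k - y 0 ord0 / 2%:R.
Proof. by rewrite MeE !mxE mulr1. Qed.
Lemma sI_Me y : sI (y *m Me r) = sI y - r%:R * (y 0 ord0 / 2%:R).
Proof.
rewrite /sI; under eq_bigr do rewrite Me_entry.
by rewrite sumrB sumr_const card_ord mulr_natl.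
Qed.
Lemma Mo_entry0 y : (y *m Mo r) 0 ord0 = y 0 ord0 * r.+1%:R / 4%:R - sI y / 2%:R.
Proof. by rewrite MoE dot_one !mxE /= mulr1; field. Qed.
Lemma Mo_entryi y i : (y *m Mo r) 0 (lift ord0 i) = y 0 (lift ord0 i) - y 0 ord0 / 2%:R.
Proof. by rewrite MoE !mxE /= mulr1; field. Qed.
Lemma sI_Mo y : sI (y *m Mo r) = sI y - r%:R * (y 0 ord0 / 2%:R).
Proof.
rewrite /sI; under eq_bigr do rewrite Mo_entryi.
by rewrite sumrB sumr_const card_ord mulr_natl.
Qed.

Lemma Yeven (hr : ~~ odd r) y :
  [/\ isZ y, y 0 ord0 / 2%:R \is a Num.int & sI y / 2%:R \is a Num.int]
  <-> PGSpGm_X (y *m Me r).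
Proof.
have hr' : r%:R = 2%:R * (r./2)%:R :> rat.
  have := odd_double_half r; rewrite (negbTE hr) add0n => e.
  by rewrite -natrM mul2n e.
split.
  move=> [Zy h0 hs]; apply PGSpGm_XE; split.
    by move=> k; rewrite Me_entry; apply: rpredB.
  rewrite sI_Me hr'.
  have -> : (sI y - 2%:R * (r./2)%:R * (y 0 ord0 / 2%:R)) / 2%:R =
     sI y / 2%:R - (r./2)%:R * (y 0 ord0 / 2%:R) by field.
  by apply: rpredB => //; apply: rpredM => //; apply: rpred_nat.
move/PGSpGm_XE => [Z' s'].
have e : y 0 ord0 / 2%:R = (y *m Me r) 0 ord0 by rewrite Me_entry; field.
have h0 : y 0 ord0 / 2%:R \is a Num.int by rewrite e.
split => //.
  move=> k; have -> : y 0 k = (y *m Me r) 0 k + y 0 ord0 / 2%:R.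
    by rewrite Me_entry; ring.
  exact: rpredD.
have -> : sI y / 2%:R = sI (y *m Me r) / 2%:R + (r./2)%:R * (y 0 ord0 / 2%:R).
  by rewrite sI_Me hr'; field.
by apply: rpredD => //; apply: rpredM => //; apply: rpred_nat.
Qed.

Lemma Yodd (hr : odd r) y :
  [/\ isZ y, y 0 ord0 / 2%:R \is a Num.int & sI y / 2%:R \is a Num.int]
  <-> isZ (y *m Mo r).
Proof.
have hr' : r%:R = 1 + 2%:R * (r./2)%:R :> rat.
  have e : r = (r./2).*2.+1 by rewrite -{1}(odd_double_half r) hr.
  by rewrite {1}e -addn1 natrD -mul2n natrM addrC.
have hS : r.+1%:R = 1 + r%:R :> rat by rewrite -addn1 natrD addrC.
split.
  move=> [Zy h0 hs] k; case: (unliftP ord0 k) => [i ->|->].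
    by rewrite Mo_entryi; apply: rpredB.
  rewrite Mo_entry0.
  have -> : y 0 ord0 * r.+1%:R / 4%:R - sI y / 2%:R =
     y 0 ord0 / 2%:R * ((r./2)%:R + 1) - sI y / 2%:R by rewrite hS hr'; field.
  by apply: rpredB => //; apply: rpredM => //; apply: rpredD; rewrite ?rpred_nat ?rpred1.
move=> Z'.
have h0 : y 0 ord0 / 2%:R \is a Num.int.
  have -> : y 0 ord0 / 2%:R = 2%:R * (y *m Mo r) 0 ord0 + sI (y *m Mo r).
    by rewrite sI_Mo Mo_entry0 hS; field.
  by apply: rpredD; [apply: rpredM; [apply: rpred_nat|apply: Z']|apply: isZ_sI].
split => //.
  move=> k; case: (unliftP ord0 k) => [i ->|->].
    have -> : y 0 (lift ord0 i) = (y *m Mo r) 0 (lift ord0 i) + y 0 ord0 / 2%:R.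
      by rewrite Mo_entryi; ring.
    exact: rpredD.
  have -> : y 0 ord0 = 2%:R * (y 0 ord0 / 2%:R) by field.
  by apply: rpredM => //; apply: rpred_nat.
have -> : sI y / 2%:R = y 0 ord0 / 2%:R * ((r./2)%:R + 1) - (y *m Mo r) 0 ord0.
  by rewrite Mo_entry0 hS hr'; field.
by apply: rpredB => //; apply: rpredM => //; apply: rpredD; rewrite ?rpred_nat ?rpred1.
Qed.
End Ylem.

Section Final.
Variable r : nat.
Variable Q : vec r.+1 -> rat.
Variable B : 'M[rat]_r.+1.
Hypothesis hB : forall y, Q y = bil B y y.
Hypothesis hW : forall (j : 'I_r) y, Q (wact j y) = Q y.
Hypothesis Q0 : Q (e0 r) = 0.
Hypothesis Q1 : forall i : 'I_r, Q (ei i) = 1.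

Ltac vtac := rewrite ?dot_one ?(sID, sIN, sIZ, sI_ei, sI_e0);
  apply/rowP => k; rewrite !mxE /= ?eqxx /=; by field.

Lemma roots_even : PGSpGm_Roots r =
  map (fun p => (p.1 *m Me r, p.2 *m Ne r)) (dualRoots 2 Q).
Proof.
rewrite /dualRoots -map_comp /GSpRoots /PGSpGm_Roots [RHS]map_cat [in RHS]map_cat [in RHS]map_flatten -[in RHS]map_comp.
congr (flatten _ ++ _ ++ _).
- apply/eq_in_map => i _ /=; rewrite [in RHS]map_cat [in RHS]map_cat -![in RHS]map_comp.
  congr (_ ++ _ ++ _); apply/eq_in_map => j; rewrite mem_filter => /andP [ji _] /=.
  + rewrite (nphi1 (Qij hB hW Q1 (_ : i != j))) 1?eq_sym //.
    congr pair; rewrite ?MeE ?NeE; vtac.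
  + rewrite (nphi1 (Qpij hB hW Q1 (_ : i != j))) 1?eq_sym //.
    congr pair; rewrite ?MeE ?NeE; vtac.
  + rewrite (nphi1 (_ : Q _ = 2%:R)); last by rewrite (QN hB) (Qpij hB hW Q1) // eq_sym.
    congr pair; rewrite ?MeE ?NeE; vtac.
- rewrite -[in RHS]map_comp; apply/eq_in_map => i _ /=; rewrite (nphi2 (Q1 i)).
  congr pair; rewrite ?MeE ?NeE; vtac.
- rewrite -[in RHS]map_comp; apply/eq_in_map => i _ /=; rewrite (nphi2 (_ : Q _ = 1)); last by rewrite (QN hB) Q1.
  congr pair; rewrite ?MeE ?NeE; vtac.
Qed.
Lemma roots_odd : GSpRoots r =
  map (fun p => (p.1 *m Mo r, p.2 *m No r)) (dualRoots 2 Q).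
Proof.
rewrite /dualRoots -map_comp /GSpRoots [RHS]map_cat [in RHS]map_cat [in RHS]map_flatten -[in RHS]map_comp.
congr (flatten _ ++ _ ++ _).
- apply/eq_in_map => i _ /=; rewrite [in RHS]map_cat [in RHS]map_cat -![in RHS]map_comp.
  congr (_ ++ _ ++ _); apply/eq_in_map => j; rewrite mem_filter => /andP [ji _] /=.
  + rewrite (nphi1 (Qij hB hW Q1 (_ : i != j))) 1?eq_sym //.
    congr pair; rewrite ?MoE ?NoE; vtac.
  + rewrite (nphi1 (Qpij hB hW Q1 (_ : i != j))) 1?eq_sym //.
    congr pair; rewrite ?MoE ?NoE; vtac.
  + rewrite (nphi1 (_ : Q _ = 2%:R)); last by rewrite (QN hB) (Qpij hB hW Q1) // eq_sym.
    congr pair; rewrite ?MoE ?NoE; vtac.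
- rewrite -[in RHS]map_comp; apply/eq_in_map => i _ /=; rewrite (nphi2 (Q1 i)).
  congr pair; rewrite ?MoE ?NoE; vtac.
- rewrite -[in RHS]map_comp; apply/eq_in_map => i _ /=; rewrite (nphi2 (_ : Q _ = 1)); last by rewrite (QN hB) Q1.
  congr pair; rewrite ?MoE ?NoE; vtac.
Qed.

Lemma Y2 (r0 : (0 < r)%N) k : YQn 2 Q (2%:R *: ev k).
Proof.
apply/(YQnE hB hW Q0 Q1 r0); split.
- by apply: isZZ; [exact: rpred_nat|exact: isZ_ev].
- rewrite mxE; have -> : 2%:R * ev k 0 ord0 / 2%:R = ev k 0 ord0 by field.
  exact: isZ_ev.
- rewrite sIZ; have -> : 2%:R * sI (ev k) / 2%:R = sI (ev k) by field.
  exact/isZ_sI/isZ_ev.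
Qed.
End Final.

Theorem mainTheorem6 (r : nat) (Q : 'rV[rat]_r.+1 -> rat) :
  (0 < r)%N ->
  isQuadForm Q -> WeylInvariant Q ->
  Q (e0 r) = 0 -> (forall i : 'I_r, Q (ei i) = 1) ->
  (odd r ->
     rdIso (YQn 2 Q) (XQn 2 Q) (dualRoots 2 Q)
           (@GSp_X r) (@GSp_Y r) (GSpRoots r)) /\
  (~~ odd r ->
     rdIso (YQn 2 Q) (XQn 2 Q) (dualRoots 2 Q)
           (@PGSpGm_X r) (@PGSpGm_Y r) (PGSpGm_Roots r)).
Proof.
move=> r0 [[B hQ] _] [_ hW] Q0 Q1.
have hB : forall y, Q y = bil B y y by move=> y; rewrite hQ.
split => hr.
- apply: (@rdIso_build _ _ _ _ _ _ _ (Mo r) (No r)).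
  + exact: MNo.
  + by move=> y; rewrite (YQnE hB hW Q0 Q1 r0); apply: Yodd.
  + move=> x; apply: (dual_transfer (P := YQn 2 Q) (P' := @isZ r.+1) (T' := @isZ r.+1) x (MNo r)).
    * by move=> y; rewrite (YQnE hB hW Q0 Q1 r0); apply: Yodd.
    * exact: isZ_dual.
    * exact: Y2 hB hW Q0 Q1 r0.
  + exact: roots_odd hB hW Q1.
- apply: (@rdIso_build _ _ _ _ _ _ _ (Me r) (Ne r)).
  + exact: MNe.
  + by move=> y; rewrite (YQnE hB hW Q0 Q1 r0); apply: Yeven.
  + move=> x; apply: (dual_transfer (P := YQn 2 Q) (P' := @PGSpGm_X r) (T' := @PGSpGm_Y r) x (MNe r)).
    * by move=> y; rewrite (YQnE hB hW Q0 Q1 r0); apply: Yeven.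
    * exact: PGSpGm_dual.
    * exact: Y2 hB hW Q0 Q1 r0.
  + exact: roots_even hB hW Q1.
Qed.
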